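(* Let $\Omega$ be a properly convex domain in $\mathbb{P}(V)$, $V \cong \mathbb{R}^d$, let $\Gamma$ be a subgroup of $\mathrm{Aut}(\Omega)$, and let $\Lambda$ be any closed $\Gamma$-invariant subset of $\partial\Omega$ whose convex hull in $\Omega$ is nonempty. If $E_+$ and $E_-$ are attracting and repelling subspaces for some divergent sequence $\{\gamma_n\} \subset \Gamma$, then $\mathbb{P}(E_+)$ and $\mathbb{P}(E_-)$ are supporting subspaces of $\Omega$ which both intersect $\Lambda$ nontrivially.
   Context: A properly convex domain is an open subset $\Omega$ of projective space whose closure lies in some affine chart and is convex there; $\mathrm{Aut}(\Omega)$ is the subgroup of $\mathrm{PGL}(V)$ preserving $\Omega$. A sequence in $\mathrm{PGL}(V)$ is divergent if it leaves every compact subset. For a divergent sequence $g_n$, nontrivial linear subspaces $E_+, E_-$ of $V$ with $\dim E_+ + \dim E_- = d$ are called attracting and repelling subspaces for $g_n$ if there is a subsequence $h_n$ of $g_n$ such that for every compact $K \subset \mathbb{P}(V) - \mathbb{P}(E_-)$, the sets $h_n\cdot K$ converge to a subset of $\mathbb{P}(E_+)$ (every divergent sequence admits such subspaces). A projective subspace $W$ is a supporting subspace of $\Omega$ if $W \cap \Omega = \emptyset$ and $W \cap \overline{\Omega} \neq \emptyset$. *)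

(* Defs.v *)
(* V = 'rV[R]_d (row vectors), R : realType.
   A subset of P(V) is represented by its cone: a set of NONZERO vectors
   closed under nonzero scalar multiplication ("pcone").
   Linear subspaces of V are represented by matrices E : 'M_d via their
   row space ((v <= E)%MS); P(E) = nonzero vectors of E.
   Elements of PGL(V) are represented by invertible matrices g, acting by
   v |-> v *m g. *)
From HB Require Import structures.
From mathcomp Require Import all_boot all_order all_algebra.
From mathcomp Require Import all_classical all_reals all_analysis.
Set Implicit Arguments. Unset Strict Implicit. Unset Printing Implicit Defensive.
Import Order.TTheory GRing.Theory Num.Theory.
Import numFieldNormedType.Exports.
Local Open Scope classical_set_scope.
Local Open Scope ring_scope.

(* projective convergence: [x n] --> [p] in P(V) (quotient topology) *)
Definition proj_cvg (R : realType) (d : nat) (x : nat -> 'rV[R]_d) (p : 'rV[R]_d)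
  : Prop :=
  p != 0 /\ exists c : nat -> R, (fun n => c n *: x n) @ \oo --> p.

Definition pcone (R : realType) (d : nat) (S : set 'rV[R]_d) : Prop :=
  forall v, S v -> v != 0 /\ forall c : R, c != 0 -> S (c *: v).

Definition pclosure (R : realType) (d : nat) (S : set 'rV[R]_d) (v : 'rV[R]_d)
  : Prop :=
  v != 0 /\ exists x : nat -> 'rV[R]_d, (forall n, S (x n)) /\ proj_cvg x v.

Definition pboundary (R : realType) (d : nat) (S : set 'rV[R]_d) (v : 'rV[R]_d)
  : Prop := pclosure S v /\ ~ S v.

Definition pclosed (R : realType) (d : nat) (S : set 'rV[R]_d) : Prop :=
  forall (x : nat -> 'rV[R]_d) p, (forall n, S (x n)) -> proj_cvg x p -> S p.

(* compact subset of P(V) (P(V) is metrizable: sequential compactness) *)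
Definition pcompact (R : realType) (d : nat) (K : set 'rV[R]_d) : Prop :=
  forall x : nat -> 'rV[R]_d, (forall n, K (x n)) ->
  exists sigma : nat -> nat, (forall n, (sigma n < sigma n.+1)%N) /\
    exists p, K p /\ proj_cvg (x \o sigma) p.

Definition lin_fun (R : realType) (d : nat) (f : 'cV[R]_d) (v : 'rV[R]_d) : R :=
  (v *m f) ord0 ord0.

(* the affine chart {f <> 0} contains the closure of Omega and Omega is
   convex in this chart *)
Definition chart_convex (R : realType) (d : nat) (Om : set 'rV[R]_d)
  (f : 'cV[R]_d) : Prop :=
  f != 0 /\
  (forall v, pclosure Om v -> lin_fun f v != 0) /\
  (forall v w (t : R), Om v -> Om w -> lin_fun f v = 1 -> lin_fun f w = 1 ->
     0 <= t <= 1 -> Om (t *: v + (1 - t) *: w)).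

Definition properly_convex_domain (R : realType) (d : nat) (Om : set 'rV[R]_d)
  : Prop :=
  pcone Om /\ open Om /\ Om !=set0 /\ exists f, chart_convex Om f.

(* Gam (preimage in GL(V)) is a subgroup of Aut(Om) *)
Definition aut_subgroup (R : realType) (d : nat) (Om : set 'rV[R]_d)
  (Gam : set 'M[R]_d) : Prop :=
  Gam 1%:M /\
  (forall g h, Gam g -> Gam h -> Gam (g *m h)) /\
  (forall g, Gam g ->
     [/\ g \in unitmx, Gam (invmx g) & forall v, Om (v *m g) <-> Om v]).

Definition divergent (R : realType) (d : nat) (gam : nat -> 'M[R]_d) : Prop :=
  forall (sigma : nat -> nat), (forall n, (sigma n < sigma n.+1)%N) ->
  forall (c : nat -> R) (g : 'M[R]_d), g \in unitmx ->
    ~ ((fun n => c n *: gam (sigma n)) @ \oo --> g).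

Definition act_set (R : realType) (d : nat) (K : set 'rV[R]_d) (g : 'M[R]_d)
  : set 'rV[R]_d := fun w => exists v, K v /\ w = v *m g.

Definition klim_inf (R : realType) (d : nat) (A : nat -> set 'rV[R]_d)
  (p : 'rV[R]_d) : Prop :=
  exists x : nat -> 'rV[R]_d,
    (exists N, forall n, (N <= n)%N -> A n (x n)) /\ proj_cvg x p.
Definition klim_sup (R : realType) (d : nat) (A : nat -> set 'rV[R]_d)
  (p : 'rV[R]_d) : Prop :=
  exists tau : nat -> nat, (forall k, (tau k < tau k.+1)%N) /\
  exists x : nat -> 'rV[R]_d, (forall k, A (tau k) (x k)) /\ proj_cvg x p.

(* the sets A n converge (Hausdorff = Kuratowski, P(V) compact metric)
   to a subset L of P(E) *)
Definition sets_converge_into (R : realType) (d : nat) (A : nat -> set 'rV[R]_d)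
  (E : 'M[R]_d) : Prop :=
  exists L : set 'rV[R]_d,
    (forall v, v != 0 -> L v -> (v <= E)%MS) /\
    (forall v, v != 0 -> (L v <-> klim_inf A v)) /\
    (forall v, v != 0 -> (L v <-> klim_sup A v)).

Definition attracting_repelling (R : realType) (d : nat) (gam : nat -> 'M[R]_d)
  (Ep Em : 'M[R]_d) : Prop :=
  (0 < \rank Ep)%N /\ (0 < \rank Em)%N /\ (\rank Ep + \rank Em)%N = d /\
  exists sigma : nat -> nat, (forall n, (sigma n < sigma n.+1)%N) /\
  forall K : set 'rV[R]_d, pcone K -> pcompact K ->
    (forall v, K v -> ~ (v <= Em)%MS) ->
    sets_converge_into (fun n => act_set K (gam (sigma n))) Ep.

Definition supporting (R : realType) (d : nat) (Om : set 'rV[R]_d)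
  (E : 'M[R]_d) : Prop :=
  (forall v, (v <= E)%MS -> ~ Om v) /\
  exists v, (v <= E)%MS /\ pclosure Om v.

Definition conv_hull (R : realType) (d : nat) (f : 'cV[R]_d)
  (Lam : set 'rV[R]_d) (v : 'rV[R]_d) : Prop :=
  exists (n : nat) (lam : 'I_n -> 'rV[R]_d) (t : 'I_n -> R),
    (forall i, Lam (lam i) /\ lin_fun f (lam i) = 1) /\
    (forall i, 0 <= t i) /\ \sum_i t i = 1 /\ v = \sum_i t i *: lam i.

(* Main.v *)
Require Import Defs.
From HB Require Import structures.
From mathcomp Require Import all_boot all_order all_algebra.
From mathcomp Require Import all_classical all_reals all_analysis.
From mathcomp.algebra_tactics Require Import ring lra.
From mathcomp Require Import zify.
Import Order.TTheory GRing.Theory Num.Theory.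
Import numFieldNormedType.Exports.
Set Implicit Arguments. Unset Strict Implicit. Unset Printing Implicit Defensive.
Local Open Scope classical_set_scope.
Local Open Scope ring_scope.



Section Basics.
Variable R : realType.

Definition conv {m n : nat} (u : nat -> 'M[R]_(m, n)) (l : 'M[R]_(m, n)) :=
  forall e : R, 0 < e -> exists N, forall k, (N <= k)%N -> `|l - u k| < e.

Definition convR (u : nat -> R) (l : R) :=
  forall e : R, 0 < e -> exists N, forall k, (N <= k)%N -> `|l - u k| < e.

Lemma near_oo (P : nat -> Prop) :
  (\forall n \near \oo, P n) <-> exists N, forall n, (N <= n)%N -> P n.
Proof.
split; first by move=> [N _ HN]; exists N => n Hn; apply: HN.
by move=> [N HN]; exists N.
Qed.

Lemma convP {m n : nat} (u : nat -> 'M[R]_(m, n)) (l : 'M[R]_(m, n)) :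
  u @ \oo --> l <-> conv u l.
Proof.
rewrite cvgrPdist_lt; split => H e /H; by rewrite near_oo.
Qed.

Lemma convRP (u : nat -> R) l : u @ \oo --> l <-> convR u l.
Proof.
rewrite cvgrPdist_lt; split => H e /H; by rewrite near_oo.
Qed.

Lemma entry_le {m n : nat} (x : 'M[R]_(m, n)) i j : `|x i j| <= `|x|.
Proof.
rewrite [X in _ <= X]/Num.Def.normr /= mx_normrE.
by apply/bigmax_geP; right; exists (i, j).
Qed.

Lemma norm_attained {m n : nat} (x : 'M[R]_(m, n)) :
  x != 0 -> exists i j, `|x| = `|x i j|.
Proof.
move=> nx; have : mx_norm x != 0.
  by apply: contra nx => /eqP /mx_norm_eq0 ->.
by move/mx_norm_neq0 => [[i j] H]; exists i, j.
Qed.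

Lemma norm_le_entries {m n : nat} (x : 'M[R]_(m, n)) (e : R) :
  0 <= e -> (forall i j, `|x i j| <= e) -> `|x| <= e.
Proof.
move=> e0 H; have [->|nx] := eqVneq x 0; first by rewrite normr0.
by have [i [j ->]] := norm_attained nx.
Qed.

Lemma norm_lt_entries {m n : nat} (x : 'M[R]_(m, n)) (e : R) :
  0 < e -> (forall i j, `|x i j| < e) -> `|x| < e.
Proof.
move=> e0 H; have [->|nx] := eqVneq x 0; first by rewrite normr0.
by have [i [j ->]] := norm_attained nx.
Qed.

Lemma conv_entries {m n : nat} (u : nat -> 'M[R]_(m, n)) (l : 'M[R]_(m, n)) :
  (forall i j, convR (fun k => u k i j) (l i j)) -> conv u l.
Proof.
move=> H e e0.
have : forall ij : 'I_m * 'I_n, exists N, forall k, (N <= k)%N ->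
    `|l ij.1 ij.2 - u k ij.1 ij.2| < e.
  by move=> [i j]; exact: H.
move=> /(_ _) /cid HN.
exists (\max_(ij : 'I_m * 'I_n) sval (HN ij)) => k Hk.
apply: norm_lt_entries => // i j; rewrite !mxE.
apply: (svalP (HN (i, j))).
apply: leq_trans Hk; exact: (leq_bigmax (i, j)).
Qed.

Lemma conv_entry {m n : nat} (u : nat -> 'M[R]_(m, n)) (l : 'M[R]_(m, n)) i j :
  conv u l -> convR (fun k => u k i j) (l i j).
Proof.
move=> H e /H [N HN]; exists N => k /HN; apply: le_lt_trans.
by have := entry_le (l - u k) i j; rewrite !mxE.
Qed.

Definition mxC {n p : nat} (M : 'M[R]_(n, p)) : R :=
  \sum_(k < n) \sum_(j < p) `|M k j|.

Lemma mxC_ge0 {n p : nat} (M : 'M[R]_(n, p)) : 0 <= mxC M.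
Proof. by apply: sumr_ge0 => k _; apply: sumr_ge0. Qed.

Lemma mul_bound {m n p : nat} (x : 'M[R]_(m, n)) (M : 'M[R]_(n, p)) :
  `|x *m M| <= `|x| * mxC M.
Proof.
apply: norm_le_entries; first by apply: mulr_ge0 => //; apply: mxC_ge0.
move=> i j; rewrite mxE.
apply: le_trans (ler_norm_sum _ _ _) _.
rewrite /mxC mulr_sumr; apply: ler_sum => k _.
rewrite normrM; apply: le_trans (ler_wpM2r _ (entry_le x i k)) _ => //.
apply: ler_wpM2l => //.
by rewrite (bigD1 j) //= lerDl; apply: sumr_ge0.
Qed.

Lemma conv_mul {m n p : nat} (u : nat -> 'M[R]_(m, n)) (l : 'M[R]_(m, n)) (M : 'M[R]_(n, p)) :
  conv u l -> conv (fun k => u k *m M) (l *m M).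
Proof.
move=> H e e0.
have C0 : 0 < mxC M + 1 by apply: ltr_wpDl (mxC_ge0 M) _.
have [N HN] := H (e / (mxC M + 1)) (divr_gt0 e0 C0).
exists N => k /HN Hk; rewrite -mulmxBl.
apply: le_lt_trans (mul_bound _ _) _.
apply: le_lt_trans (ler_wpM2l (normr_ge0 _) (_ : mxC M <= mxC M + 1)) _.
  by rewrite lerDl.
by rewrite -ltr_pdivlMr.
Qed.

Lemma conv_scale {m n : nat} (u : nat -> 'M[R]_(m, n)) (l : 'M[R]_(m, n)) (c : R) :
  conv u l -> conv (fun k => c *: u k) (c *: l).
Proof.
move=> H e e0.
have C0 : 0 < `|c| + 1 by apply: ltr_wpDl (normr_ge0 c) _.
have [N HN] := H (e / (`|c| + 1)) (divr_gt0 e0 C0).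
exists N => k /HN Hk; rewrite -scalerBr normrZ.
apply: le_lt_trans (ler_wpM2r (normr_ge0 _) (_ : `|c| <= `|c| + 1)) _.
  by rewrite lerDl.
by rewrite mulrC -ltr_pdivlMr.
Qed.

Lemma conv_add {m n : nat} (u v : nat -> 'M[R]_(m, n)) (l l' : 'M[R]_(m, n)) :
  conv u l -> conv v l' -> conv (fun k => u k + v k) (l + l').
Proof.
move=> Hu Hv e e0.
have e2 : 0 < e / 2 by rewrite divr_gt0.
have [N1 H1] := Hu (e / 2) e2.
have [N2 H2] := Hv (e / 2) e2.
exists (maxn N1 N2) => k; rewrite geq_max => /andP [k1 k2].
rewrite opprD addrACA; apply: le_lt_trans (ler_normD _ _) _.
by rewrite (splitr e); apply: ltrD; [apply: H1|apply: H2].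
Qed.

Definition sincr (phi : nat -> nat) := forall n, (phi n < phi n.+1)%N.

Lemma sincr_ge phi : sincr phi -> forall n, (n <= phi n)%N.
Proof. by move=> H; elim => // n IH; apply: leq_ltn_trans IH (H n). Qed.

Lemma sincr_mono phi : sincr phi -> forall n m, (n <= m)%N -> (phi n <= phi m)%N.
Proof.
move=> H n m /subnK <-; elim: (m - n)%N => // k IH.
by rewrite addSn; apply: leq_trans IH (ltnW (H _)).
Qed.

Lemma sincr_comp phi psi : sincr phi -> sincr psi -> sincr (phi \o psi).
Proof.
move=> H1 H2 n /=; have := sincr_mono H1 (H2 n).
by move=> Hm; apply: leq_trans Hm; apply: H1.
Qed.

Lemma sincr_shift phi J : sincr phi -> sincr (fun n => phi (n + J)%N).
Proof. by move=> H n; rewrite addSn; apply: H. Qed.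

Lemma sincr_id : sincr id. Proof. by []. Qed.

Lemma conv_sub {m n : nat} (u : nat -> 'M[R]_(m, n)) (l : 'M[R]_(m, n)) phi :
  sincr phi -> conv u l -> conv (u \o phi) l.
Proof.
move=> Hp H e /H [N HN]; exists N => k Hk; apply: HN.
by apply: leq_trans Hk (sincr_ge Hp k).
Qed.

Lemma conv_shift {m n : nat} (u : nat -> 'M[R]_(m, n)) (l : 'M[R]_(m, n)) J :
  conv u l -> conv (fun k => u (k + J)%N) l.
Proof.
move=> H e /H [N HN]; exists N => k Hk; apply: HN.
by apply: leq_trans Hk (leq_addr _ _).
Qed.

Lemma convR_sub (u : nat -> R) l phi :
  sincr phi -> convR u l -> convR (u \o phi) l.
Proof.
move=> Hp H e /H [N HN]; exists N => k Hk; apply: HN.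
by apply: leq_trans Hk (sincr_ge Hp k).
Qed.

Lemma incr_sincr (f : nat -> nat) : increasing_seq f -> sincr f.
Proof. by move=> /increasing_seqP H n; apply: H. Qed.

Lemma bolzanoR (u : nat -> R) (M : R) :
  (forall k, `|u k| <= M) -> exists phi, sincr phi /\ exists l, convR (u \o phi) l.
Proof.
move=> H.
have bu : bounded_fun u.
  exists M; split; first by rewrite num_real.
  by move=> x Mx k _ /=; apply: le_trans (H k) (ltW Mx).
have [f /incr_sincr fi cf] := bolzano_weierstrass bu.
exists f; split => //; exists (lim ((u \o f) @ \oo)).
by apply/convRP; apply: cf.
Qed.

Lemma bolzano_list {m n : nat} (u : nat -> 'M[R]_(m, n)) (M : R)
  (s : seq ('I_m * 'I_n)) :
  (forall k, `|u k| <= M) -> exists phi, sincr phi /\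
    forall ij, ij \in s -> exists l, convR (fun k => u (phi k) ij.1 ij.2) l.
Proof.
move=> H; elim: s => [|ij s [phi [Hphi IH]]].
  by exists id; split => //.
have Hb : forall k, `|(fun k => u (phi k) ij.1 ij.2) k| <= M.
  by move=> k; apply: le_trans (entry_le _ _ _) (H _).
have [psi [Hpsi [l Hl]]] := bolzanoR Hb.
exists (phi \o psi); split; first exact: sincr_comp.
move=> ij'; rewrite inE => /orP [/eqP ->|/IH [l' Hl']].
  by exists l.
by exists l'; apply: (convR_sub (u := fun k => u (phi k) ij'.1 ij'.2)).
Qed.

Lemma bolzano {m n : nat} (u : nat -> 'M[R]_(m, n)) (M : R) :
  (forall k, `|u k| <= M) -> exists phi, sincr phi /\ exists l, conv (u \o phi) l.
Proof.
move=> H; have [phi [Hphi Hl]] := bolzano_list (enum {: 'I_m * 'I_n}) H.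
have : forall ij : 'I_m * 'I_n, exists l, convR (fun k => u (phi k) ij.1 ij.2) l.
  by move=> ij; apply: Hl; rewrite mem_enum.
move=> /(_ _) /cid Hc.
exists phi; split => //; exists (\matrix_(i, j) sval (Hc (i, j))).
apply: conv_entries => i j; rewrite mxE; exact: (svalP (Hc (i, j))).
Qed.

End Basics.



Section Proj.
Variable R : realType.
Variable d : nat.
Notation V := 'rV[R]_d.

Lemma scale_sub (c : R) (v : V) (E : 'M[R]_d) :
  c != 0 -> (c *: v <= E)%MS = (v <= E)%MS.
Proof.
move=> c0; apply/idP/idP => H; last exact: scalemx_sub.
by rewrite -(scalerK c0 v); apply: scalemx_sub.
Qed.

Lemma avoid_ball (p : V) (E : 'M[R]_d) :
  ~~ (p <= E)%MS -> exists2 del : R, 0 < del &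
    forall v : V, `|v - p| < del -> ~~ (v <= E)%MS.
Proof.
rewrite submxE => pE.
set M := cokermx E.
have C0 : 0 < mxC M + 1 by apply: ltr_wpDl (mxC_ge0 M) _.
have n0 : 0 < `|p *m M| by rewrite normr_gt0.
exists (`|p *m M| / (mxC M + 1)); first by rewrite divr_gt0.
move=> v Hv; rewrite submxE; apply/negP => /eqP vM.
have : `|p *m M| <= `|v - p| * (mxC M + 1).
  have -> : p *m M = - ((v - p) *m M) by rewrite mulmxBl vM sub0r opprK.
  rewrite normrN; apply: le_trans (mul_bound _ _) _.
  by apply: ler_wpM2l => //; rewrite lerDl.
by rewrite -ler_pdivrMr // leNgt Hv.
Qed.

Lemma conv_closed (u : nat -> V) (l : V) (E : 'M[R]_d) :
  conv u l -> (forall k, (u k <= E)%MS) -> (l <= E)%MS.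
Proof.
move=> H Hu; apply: contraT => /avoid_ball [del del0 Hd].
have [N HN] := H del del0.
by have := Hd (u N); rewrite -normrN opprB HN // Hu => /(_ isT).
Qed.

Lemma proj_cvgP (x : nat -> V) (p : V) :
  proj_cvg x p <-> p != 0 /\ exists c : nat -> R, conv (fun n => c n *: x n) p.
Proof.
rewrite /proj_cvg; split => -[p0 [c Hc]]; split => //; exists c.
  by apply/convP.
by apply/convP.
Qed.

Lemma proj_sub (x : nat -> V) (p : V) phi :
  sincr phi -> proj_cvg x p -> proj_cvg (x \o phi) p.
Proof.
move=> Hp /proj_cvgP [p0 [c Hc]]; apply/proj_cvgP; split => //.
exists (c \o phi); exact: (conv_sub (u := fun n => c n *: x n)).
Qed.

Lemma proj_shift (x : nat -> V) (p : V) J :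
  proj_cvg x p -> proj_cvg (fun k => x (k + J)%N) p.
Proof.
move=> /proj_cvgP [p0 [c Hc]]; apply/proj_cvgP; split => //.
exists (fun k => c (k + J)%N); exact: (conv_shift (u := fun n => c n *: x n)).
Qed.

Lemma proj_mul (x : nat -> V) (p : V) (M : 'M[R]_d) :
  proj_cvg x p -> p *m M != 0 -> proj_cvg (fun n => x n *m M) (p *m M).
Proof.
move=> /proj_cvgP [p0 [c Hc]] pM; apply/proj_cvgP; split => //.
exists c; have := conv_mul M Hc.
by under [X in conv X _ -> _]funext => n do rewrite -scalemxAl.
Qed.

Lemma proj_evt (x : nat -> V) (p : V) (E : 'M[R]_d) :
  proj_cvg x p -> ~~ (p <= E)%MS -> exists J, forall k, (J <= k)%N -> ~~ (x k <= E)%MS.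
Proof.
move=> /proj_cvgP [p0 [c Hc]] /avoid_ball [del del0 Hd].
have [N HN] := Hc del del0; exists N => k /HN Hk.
apply/negP => xE; have := Hd (c k *: x k).
by rewrite -normrN opprB Hk // scalemx_sub // => /(_ isT).
Qed.

Lemma proj_closed (x : nat -> V) (p : V) (E : 'M[R]_d) :
  proj_cvg x p -> (forall k, (x k <= E)%MS) -> (p <= E)%MS.
Proof.
move=> Hx HE; apply: contraT => /(proj_evt Hx) [J HJ].
by have := HJ J (leqnn J); rewrite HE.
Qed.

Lemma proj_compact (x : nat -> V) :
  (forall k, x k != 0) -> exists phi, sincr phi /\ exists (p : V) (c : nat -> R),
    [/\ p != 0, forall k, c k != 0 & conv (fun k => c k *: x (phi k)) p].
Proof.
move=> x0.
pose u k := `|x k|^-1 *: x k.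
have nu : forall k, `|u k| = 1.
  move=> k; rewrite normrZ normrV ?unitfE ?normr_eq0 // normr_id mulVf //.
  by rewrite normr_eq0.
have Hb : forall k, `|u k| <= 1 by move=> k; rewrite nu.
have [phi [Hphi [l Hl]]] := bolzano Hb.
exists phi; split => //; exists l, (fun k => `|x (phi k)|^-1); split => //.
- apply/negP => /eqP l0; have [N HN] := Hl 1 ltr01.
  by have := HN N (leqnn N); rewrite l0 sub0r normrN /= nu ltxx.
- by move=> k; rewrite invr_eq0 normr_eq0.
Qed.

Lemma proj_compact_sub (x : nat -> V) :
  (forall k, x k != 0) -> exists phi, sincr phi /\ exists p, proj_cvg (x \o phi) p.
Proof.
move=> /proj_compact [phi [Hphi [p [c [p0 _ Hc]]]]].
by exists phi; split => //; exists p; apply/proj_cvgP; split => //; exists c.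
Qed.

End Proj.



Section Geom.
Variable R : realType.
Variable d : nat.
Notation V := 'rV[R]_d.

Lemma lin_funD (f : 'cV[R]_d) (v w : V) :
  lin_fun f (v + w) = lin_fun f v + lin_fun f w.
Proof. by rewrite /lin_fun mulmxDl mxE. Qed.

Lemma lin_funZ (f : 'cV[R]_d) (c : R) (v : V) :
  lin_fun f (c *: v) = c * lin_fun f v.
Proof. by rewrite /lin_fun -scalemxAl mxE. Qed.

Lemma lin_funB (f : 'cV[R]_d) (v w : V) :
  lin_fun f (v - w) = lin_fun f v - lin_fun f w.
Proof. by rewrite /lin_fun mulmxBl !mxE. Qed.

Lemma lin_fun_bound (f : 'cV[R]_d) (v : V) :
  `|lin_fun f v| <= `|v| * mxC f.
Proof. by apply: le_trans (entry_le _ _ _) (mul_bound _ _). Qed.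

Lemma conv_const (m n : nat) (l : 'M[R]_(m, n)) : conv (fun _ => l) l.
Proof. by move=> e e0; exists 0%N => k _; rewrite subrr normr0. Qed.

Lemma proj_const (p : V) : p != 0 -> proj_cvg (fun _ => p) p.
Proof.
move=> p0; apply/proj_cvgP; split => //; exists (fun _ => 1).
by under [X in conv X _]funext => n do rewrite scale1r; apply: conv_const.
Qed.

Variable Om : set V.
Variable f : 'cV[R]_d.
Hypothesis pc : pcone Om.
Hypothesis cc : chart_convex Om f.

Lemma Om_closure v : Om v -> pclosure Om v.
Proof.
move=> Ov; have v0 := (pc Ov).1; split => //.
by exists (fun _ => v); split => //; apply: proj_const.
Qed.

Lemma f_nz v : Om v -> lin_fun f v != 0.
Proof. by move=> /Om_closure; apply: cc.2.1. Qed.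

Lemma poscomb_pos a b (l m : R) : Om a -> Om b -> 0 < lin_fun f a -> 0 < lin_fun f b ->
  0 < l -> 0 < m -> Om (l *: a + m *: b).
Proof.
move=> Oa Ob A0 B0 l0 m0.
set A := lin_fun f a in A0 *; set B := lin_fun f b in B0 *.
have Oa' : Om (A^-1 *: a) by apply: (pc Oa).2; rewrite invr_eq0 gt_eqF.
have Ob' : Om (B^-1 *: b) by apply: (pc Ob).2; rewrite invr_eq0 gt_eqF.
have fa' : lin_fun f (A^-1 *: a) = 1 by rewrite lin_funZ mulVf // gt_eqF.
have fb' : lin_fun f (B^-1 *: b) = 1 by rewrite lin_funZ mulVf // gt_eqF.
have lA : 0 < l * A by apply: mulr_gt0.
have mB : 0 < m * B by apply: mulr_gt0.
set S := l * A + m * B.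
have S0 : 0 < S by apply: addr_gt0.
set t := l * A / S.
have t01 : 0 <= t <= 1.
  apply/andP; split; first by apply: divr_ge0; apply: ltW.
  by rewrite ler_pdivrMr // mul1r lerDl ltW.
have := cc.2.2 _ _ t Oa' Ob' fa' fb' t01.
move=> /(pc) [_ /(_ S (lt0r_neq0 S0))].
rewrite scalerDr !scalerA.
have An : A != 0 by rewrite gt_eqF.
have Bn : B != 0 by rewrite gt_eqF.
have Sn : S != 0 by rewrite gt_eqF.
have -> : S * t * A^-1 = l by rewrite /t; field; rewrite ?An ?Sn.
have -> : S * (1 - t) * B^-1 = m.
  by rewrite /t; rewrite /S in Sn *; field; rewrite ?An ?Bn ?Sn.
done.
Qed.

Lemma poscomb a b (l m : R) : Om a -> Om b -> 0 < lin_fun f a * lin_fun f b ->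
  0 < l -> 0 < m -> Om (l *: a + m *: b).
Proof.
move=> Oa Ob ab l0 m0.
have [A0|A0] := ltP 0 (lin_fun f a).
  have B0 : 0 < lin_fun f b by rewrite -(pmulr_rgt0 _ A0).
  exact: poscomb_pos.
have A0' : lin_fun f a < 0 by rewrite lt_neqAle A0 f_nz.
have B0 : lin_fun f b < 0 by rewrite -(nmulr_rgt0 _ A0').
have Oa' : Om ((-1) *: a) by apply: (pc Oa).2; rewrite oppr_eq0 oner_eq0.
have Ob' : Om ((-1) *: b) by apply: (pc Ob).2; rewrite oppr_eq0 oner_eq0.
have := poscomb_pos Oa' Ob' _ _ l0 m0.
rewrite !lin_funZ !mulN1r !oppr_gt0 => /(_ A0' B0) /(pc) [_ /(_ (-1))].
rewrite oppr_eq0 oner_eq0 => /(_ isT).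
by rewrite scalerDr !scalerA !mulrN1 !mulNr !opprK !mul1r.
Qed.

Lemma sign_pres (g : 'M[R]_d) a b : (forall v, Om (v *m g) <-> Om v) ->
  Om a -> Om b -> 0 < lin_fun f a * lin_fun f b ->
  0 < lin_fun f (a *m g) * lin_fun f (b *m g).
Proof.
move=> Hg Oa Ob ab.
have Oag : Om (a *m g) by apply/Hg.
have Obg : Om (b *m g) by apply/Hg.
have fa := f_nz Oag; have fb := f_nz Obg.
set al := lin_fun f (a *m g) in fa *; set be := lin_fun f (b *m g) in fb *.
rewrite ltNge; apply/negP => H.
have Oc : Om (`|be| *: a + `|al| *: b).
  by apply: poscomb; rewrite // normr_gt0.
have := f_nz (proj2 (Hg _) Oc).
rewrite mulmxDl -!scalemxAl lin_funD !lin_funZ -/al -/be.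
have [al0|al0] := ltP 0 al.
  have be0 : be < 0.
    by rewrite lt_neqAle fb /= -(pmulr_rle0 _ al0).
  by rewrite (gtr0_norm al0) (ltr0_norm be0) => /eqP []; ring.
have al0' : al < 0 by rewrite lt_neqAle fa al0.
have be0 : 0 < be.
  by rewrite lt_neqAle eq_sym fb /= -(nmulr_rle0 _ al0').
by rewrite (ltr0_norm al0') (gtr0_norm be0) => /eqP []; ring.
Qed.

Lemma ball_sign (q : V) (e : R) :
  (forall v, `|v - q| < e -> Om v) -> forall v, `|v - q| < e ->
  0 < lin_fun f q * lin_fun f v.
Proof.
move=> Hb v Hv.
have Oq : Om q by apply: Hb; rewrite subrr normr0 (le_lt_trans _ Hv).
have fq := f_nz Oq; have fv := f_nz (Hb _ Hv).
set A := lin_fun f q in fq *; set B := lin_fun f v in fv *.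
rewrite ltNge; apply/negP => H.
have A2 : 0 < A * A by rewrite lt0r mulf_neq0 //= -expr2 sqr_ge0.
have D0 : 0 < A * A - A * B by rewrite subr_gt0 (le_lt_trans H A2).
have Dn : A - B != 0.
  apply/negP => /eqP E; move: D0; rewrite -mulrBr E mulr0 ltxx //.
set t := A / (A - B).
have tE : t = (A * A) / (A * A - A * B).
  by rewrite /t; field; rewrite ?Dn ?fq //= -mulrBr mulf_neq0.
have t0 : 0 <= t by rewrite tE divr_ge0 // ltW.
have t1 : t <= 1.
  by rewrite tE ler_pdivrMr // mul1r; nra.
set z := q + t *: (v - q).
have Oz : Om z.
  apply: Hb; rewrite /z addrC addKr normrZ ger0_norm //.
  by apply: le_lt_trans Hv; rewrite ler_piMl.
have := f_nz Oz; rewrite /z lin_funD lin_funZ lin_funB -/A -/B /t.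
by move=> /eqP []; field.
Qed.


Lemma Om_bound : exists2 M : R, 0 < M & forall v, Om v -> `|v| <= M * `|lin_fun f v|.
Proof.
apply: contrapT => Hn.
have Hk : forall k : nat, exists v, Om v /\ (k.+1)%:R * `|lin_fun f v| < `|v|.
  move=> k; apply: contrapT => Hc; apply: Hn; exists (k.+1)%:R; first by rewrite ltr0Sn.
  move=> v Ov; rewrite leNgt; apply/negP => H; apply: Hc; exists v; split => //.
have /(_ _)/cid vv := Hk.
set w := fun k => sval (vv k).
have Ow : forall k, Om (w k) by move=> k; exact: (svalP (vv k)).1.
have Hw : forall k, (k.+1)%:R * `|lin_fun f (w k)| < `|w k|.
  by move=> k; exact: (svalP (vv k)).2.
have w0 : forall k, w k != 0 by move=> k; exact: (pc (Ow k)).1.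
have [phi [Hphi [p [c [p0 c0 Hc]]]]] := proj_compact w0.
have pcl : pclosure Om p.
  split => //; exists (w \o phi); split; first by move=> n; apply: Ow.
  apply/proj_cvgP; split => //.
  by exists c.
have fp := cc.2.1 _ pcl.
set F := `|lin_fun f p|.
have F0 : 0 < F by rewrite normr_gt0.
set C := mxC f + 1.
have C0 : 0 < C by apply: ltr_wpDl (mxC_ge0 f) _.
set e := Num.min 1 (F / 2 / C).
have e0 : 0 < e by rewrite lt_min ltr01 /= !divr_gt0.
have [N HN] := Hc e e0.
set K0 := Num.Def.archi_bound (2 * (`|p| + 1) / F).
have HK0 := @archi_boundP R (2 * (`|p| + 1) / F) _.
set k := maxn N K0.
have Hk1 := HN k (leq_maxl _ _).
set u := c k *: w (phi k).
have nu : `|u| <= `|p| + 1.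
  have -> : u = p - (p - u) by rewrite opprB addrC subrK.
  apply: le_trans (ler_normB _ _) _; apply: lerD => //.
  by apply: ltW; apply: lt_le_trans Hk1 _; rewrite ge_min lexx.
have fu : `|lin_fun f u| * (k.+1)%:R <= `|p| + 1.
  have h1 : `|lin_fun f (w (phi k))| * (k.+1)%:R <= `|w (phi k)|.
    apply: le_trans (ltW (Hw (phi k))); rewrite mulrC; apply: ler_wpM2r => //.
    by rewrite ler_nat ltnS; exact: sincr_ge.
  rewrite /u lin_funZ normrM -mulrA; apply: le_trans _ nu; rewrite /u normrZ.
  exact: ler_wpM2l.
have fpu : `|lin_fun f (p - u)| < F / 2.
  apply: le_lt_trans (lin_fun_bound _ _) _.
  apply: le_lt_trans (ler_wpM2l (normr_ge0 _) (_ : mxC f <= C)) _.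
    by rewrite lerDl.
  rewrite -ltr_pdivlMr //; apply: lt_le_trans Hk1 _; rewrite ge_min lexx orbT.
  done.
have kb : 2 * (`|p| + 1) / F < (k.+1)%:R.
  apply: lt_le_trans (HK0 _) _.
    by rewrite divr_ge0 ?mulr_ge0 ?addr_ge0 // ltW.
  by rewrite ler_nat; apply: leqW; apply: leq_maxr.
have fu2 : `|lin_fun f u| < F / 2.
  have k0 : 0 < (k.+1)%:R :> R by rewrite ltr0Sn.
  apply: le_lt_trans (_ : `|lin_fun f u| <= (`|p| + 1) / (k.+1)%:R) _.
    by rewrite ler_pdivlMr.
  rewrite ltr_pdivrMr //; move: kb; rewrite ltr_pdivrMr // => kb; lra.
have : F < F.
  rewrite {1}/F (_ : p = (p - u) + u); last by rewrite subrK.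
  rewrite lin_funD; apply: le_lt_trans (ler_normD _ _) _.
  by rewrite (splitr F); apply: ltrD.
by rewrite ltxx.
Qed.

End Geom.



Section Att.
Variable R : realType.
Variable d : nat.
Notation V := 'rV[R]_d.

Definition Att (h : nat -> 'M[R]_d) (A Rr : 'M[R]_d) :=
  forall (x : nat -> V) (xinf : V) (n : nat -> nat) (p : V),
  (forall j, x j != 0) -> proj_cvg x xinf -> ~~ (xinf <= Rr)%MS -> sincr n ->
  proj_cvg (fun j => x j *m h (n j)) p -> (p <= A)%MS.

Lemma Fseq (gam : nat -> 'M[R]_d) (sigma : nat -> nat) (Ep Em : 'M[R]_d) :
  (forall K : set V, pcone K -> pcompact K ->
    (forall v, K v -> ~ (v <= Em)%MS) ->
    sets_converge_into (fun n => act_set K (gam (sigma n))) Ep) ->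
  Att (fun n => gam (sigma n)) Ep Em.
Proof.
move=> H x xinf n p x0 Hx xE Hn Hp.
have xi0 : xinf != 0 by case: Hx.
have [del del0 Hd] := avoid_ball xE.
set mn := Num.min del `|xinf|.
have mn0 : 0 < mn by rewrite lt_min del0 normr_gt0.
have mnd : mn <= del by rewrite ge_min lexx.
have mnx : mn <= `|xinf| by rewrite ge_min lexx orbT.
set r := mn / 2.
have r0 : 0 < r by rewrite divr_gt0.
have rmn : r < mn by rewrite /r; lra.
have rd : r < del := lt_le_trans rmn mnd.
have rx : r < `|xinf| := lt_le_trans rmn mnx.
pose K := fun v : V => v != 0 /\ exists c : R, `|c *: v - xinf| <= r.
have pcK : pcone K.
  move=> v [v0 [c Hc]]; split => // c' c'0; split; first by rewrite scaler_eq0 negb_or c'0.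
  by exists (c / c'); rewrite scalerA mulfVK.
have avK : forall v, K v -> ~ (v <= Em)%MS.
  move=> v [v0 [c Hc]] vE; have := Hd (c *: v) (le_lt_trans Hc rd).
  by rewrite scalemx_sub.
have cK : pcompact K.
  move=> z Kz.
  have /(_ _)/cid cz : forall i, exists c : R, `|c *: z i - xinf| <= r.
    by move=> i; case: (Kz i).
  pose w i := sval (cz i) *: z i.
  have wb : forall i, `|w i| <= `|xinf| + r.
    move=> i; have -> : w i = xinf + (w i - xinf) by rewrite addrC subrK.
    by apply: le_trans (ler_normD _ _) _; apply: lerD => //; exact: (svalP (cz i)).
  have [phi [Hphi [l Hl]]] := bolzano wb.
  have lr : `|l - xinf| <= r.
    rewrite leNgt; apply/negP => Hlt.
    have Hpos : 0 < `|l - xinf| - r by rewrite subr_gt0.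
    have [N HN] := Hl _ Hpos.
    have := HN N (leqnn N); rewrite /= => HNN.
    have : `|l - xinf| < `|l - xinf|.
      have -> : l - xinf = (l - w (phi N)) + (w (phi N) - xinf) by rewrite addrA subrK.
      apply: le_lt_trans (ler_normD _ _) _.
      have := svalP (cz (phi N)) => /= Hr.
      rewrite -[X in _ < X](subrK r); apply: ltr_leD => //.
      by rewrite addrA subrK.
    by rewrite ltxx.
  have l0 : l != 0.
    apply/negP => /eqP l0; move: lr; rewrite l0 sub0r normrN => lr.
    by move: (lt_le_trans rx lr); rewrite ltxx.
  exists phi; split => //; exists l; split.
    by split => //; exists 1; rewrite scale1r.
  apply/proj_cvgP; split => //; exists (fun i => sval (cz (phi i))).
  exact: Hl.
have [c Hc] := (proj1 (proj_cvgP x xinf) Hx).2.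
have [N HN] := Hc r r0.
have KxN : forall k, K (x (k + N)%N).
  move=> k; split => //; exists (c (k + N)%N).
  by rewrite -normrN opprB; apply: ltW; apply: HN; rewrite leq_addl.
have [L [L1 [L2 L3]]] := H K pcK cK avK.
have p0 : p != 0 by case: Hp.
apply: L1 => //; apply/L3 => //.
exists (fun k => n (k + N)%N); split; first exact: sincr_shift.
exists (fun k => x (k + N)%N *m gam (sigma (n (k + N)%N))); split.
  by move=> k; exists (x (k + N)%N); split.
exact: (proj_shift (x := fun j => x j *m gam (sigma (n j)))).
Qed.

Lemma Bseq (h : nat -> 'M[R]_d) (A Rr : 'M[R]_d) :
  (forall n, h n \in unitmx) -> Att h A Rr -> Att (fun n => invmx (h n)) Rr A.
Proof.
move=> hu H y yinf n p y0 Hy yA Hn Hp.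
apply: contraT => pR.
set x := fun j => y j *m invmx (h (n j)).
have x0 : forall j, x j != 0.
  move=> j; apply/negP => /eqP xj; move: (y0 j).
  by rewrite -(mulmxKV (hu (n j)) (y j)) -/(x j) xj mul0mx eqxx.
have : (yinf <= A)%MS.
  apply: (H x p n yinf x0 Hp pR Hn).
  by under [X in proj_cvg X _]funext => j do rewrite /x mulmxKV //.
by rewrite (negbTE yA).
Qed.

End Att.



Section Core.
Variable R : realType.
Variable d : nat.
Notation V := 'rV[R]_d.

Lemma sincr_addr phi N : sincr phi -> sincr (fun j => (phi j + N)%N).
Proof. by move=> H j; rewrite ltn_add2r. Qed.

Lemma samesign (x y : R) : 0 < x * y ->
  [/\ `|x| <= `|x + y|, `|y| <= `|x + y| & x + y != 0].
Proof.
move=> xy; have [x0|x0] := ltP 0 x.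
  have y0 : 0 < y by rewrite -(pmulr_rgt0 _ x0).
  have s0 : 0 < x + y by apply: addr_gt0.
  rewrite !gtr0_norm // gt_eqF //; split => //; lra.
have x0' : x < 0 by rewrite lt_neqAle x0 andbT; apply/negP => /eqP x00; move: xy; rewrite x00 mul0r ltxx.
have y0 : y < 0 by rewrite -(nmulr_rgt0 _ x0').
have s0 : x + y < 0 by lra.
rewrite !ltr0_norm // lt_eqF //; split => //; lra.
Qed.

Lemma sub_oppB (C : 'M[R]_d) (a b : V) :
  (a <= C)%MS -> (b <= C)%MS -> (a - b <= C)%MS.
Proof.
move=> aC bC; apply: addmx_sub => //.
by rewrite -scaleN1r; apply: scalemx_sub.
Qed.

Lemma core (Om : set V) (f : 'cV[R]_d) (h : nat -> 'M[R]_d) (A Rr : 'M[R]_d) :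
  pcone Om -> open Om -> chart_convex Om f ->
  (forall n, h n \in unitmx /\ forall v, Om (v *m h n) <-> Om v) ->
  Att h A Rr -> (\rank A + \rank Rr)%N = d -> (0 < \rank A)%N ->
  forall q : V, (q <= Rr)%MS -> ~ Om q.
Proof.
move=> pc op cc hG H rk rA q qR Oq.
have q0 : q != 0 := (pc _ Oq).1.
set W := (Rr^C)%MS.
have rW : \rank W = \rank A by rewrite mxrank_compl; lia.
have WR : forall v : V, (v <= W)%MS -> (v <= Rr)%MS -> v = 0.
  move=> v vW vR; apply/eqP; rewrite -submx0 -(capmx_compl Rr) sub_capmx vR.
  exact: vW.
set U := (q + W)%MS.
have rU : \rank U = (\rank A).+1.
  have := mxrank_sum_cap q W.
  have -> : \rank (q :&: W)%MS = 0%N.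
    apply/eqP; rewrite mxrank_eq0 -submx0 -(capmx_compl Rr).
    by apply: capmxS.
  by rewrite addn0 rank_rV q0 rW.
set Y := (A^C)%MS.
have rY : \rank Y = (d - \rank A)%N by rewrite mxrank_compl.
have AY : forall v : V, (v <= A)%MS -> (v <= Y)%MS -> v = 0.
  move=> v vA vY; apply/eqP; rewrite -submx0 -(capmx_compl A) sub_capmx vA.
  exact: vY.
have rAd : (\rank A <= d)%N := rank_leq_col A.
have ex_u : forall n, exists u : V, [/\ u != 0, (u <= U)%MS & (u *m h n <= Y)%MS].
  move=> n; have [hu _] := hG n.
  have rUh : \rank (U *m h n) = (\rank A).+1 by rewrite mxrankMfree ?row_free_unit.
  have : (U *m h n :&: Y)%MS != 0.
    apply/negP => /eqP c0; have := mxrank_sum_cap (U *m h n) Y.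
    rewrite c0 mxrank0 addn0 rUh rY => E.
    have := rank_leq_col (U *m h n + Y)%MS; rewrite E; lia.
  move/rowV0Pn => [y]; rewrite sub_capmx => /andP [yU yY] y0.
  exists (y *m invmx (h n)); split.
  - apply/negP => /eqP z; move: y0.
    by rewrite -(mulmxKV hu y) z mul0mx eqxx.
  - by have := submxMr (invmx (h n)) yU; rewrite mulmxK.
  - by rewrite mulmxKV.
have /(_ _)/cid uu := ex_u.
set u := fun n => sval (uu n).
have u0 : forall n, u n != 0 by move=> n; case: (svalP (uu n)).
have uU : forall n, (u n <= U)%MS by move=> n; case: (svalP (uu n)).
have uY : forall n, (u n *m h n <= Y)%MS by move=> n; case: (svalP (uu n)).
have [phi1 [Hphi1 [p1 [c [p10 c0 Hc]]]]] := proj_compact u0.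
have p1U : (p1 <= U)%MS.
  by apply: (conv_closed Hc) => k; apply: scalemx_sub.
have Hu1 : proj_cvg (u \o phi1) p1.
  by apply/proj_cvgP; split => //; exists c.
case: (boolP (p1 <= Rr)%MS) => p1R; last first.
  set z := fun k => u (phi1 k) *m h (phi1 k).
  have z0 : forall k, z k != 0.
    move=> k; apply/negP => /eqP zk; move: (u0 (phi1 k)).
    by rewrite -(mulmxK (hG (phi1 k)).1 (u (phi1 k))) -/(z k) zk mul0mx eqxx.
  have [phi2 [Hphi2 [p2 Hp2]]] := proj_compact_sub z0.
  have p2A : (p2 <= A)%MS.
    apply: (H (u \o phi1 \o phi2) p1 (phi1 \o phi2) p2).
    - by move=> j; apply: u0.
    - exact: proj_sub.
    - exact: p1R.
    - exact: sincr_comp.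
    - exact: Hp2.
  have p2Y : (p2 <= Y)%MS.
    by apply: (proj_closed Hp2) => k; apply: uY.
  by have := AY _ p2A p2Y; case: Hp2 => /eqP.

have [s Hs] : exists s : R, p1 = s *: q.
  move: p1U => /sub_addsmxP [[a b] /= Hab].
  have bW : (b *m W <= W)%MS := submxMl _ _.
  have aq : (a *m q <= Rr)%MS := submx_trans (submxMl _ _) qR.
  have bR : (b *m W <= Rr)%MS.
    have -> : b *m W = p1 - a *m q by rewrite Hab addrC addKr.
    exact: sub_oppB.
  have b0 := WR _ bW bR.
  exists (a 0 0); rewrite Hab b0 addr0 {1}(mx11_scalar a) mul_scalar_mx //.
have s0 : s != 0 by apply/negP => /eqP s0; move: p10; rewrite Hs s0 scale0r eqxx.
set v := fun k => (s^-1 * c k) *: u (phi1 k).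
have Hv : conv v q.
  have := conv_scale s^-1 Hc; rewrite Hs scalerA mulVf // scale1r.
  by under [X in conv X _ -> _]funext => k do rewrite scalerA.
have [e e0 He] : exists2 e : R, 0 < e & forall x : V, `|x - q| < e -> Om x.
  have := op q Oq; move=> /nbhs_ballP [e e0 He]; exists e => // x Hx.
  apply: He; rewrite -ball_normE /ball_ /= -normrN opprB //.
have W0 : W != 0 by rewrite -mxrank_eq0 rW -lt0n.
have [w0 w0W w00] := rowV0Pn W0.
have nw0 : 0 < `|w0| by rewrite normr_gt0.
set w := (e / 2 / `|w0|) *: w0.
have nw : `|w| = e / 2.
  rewrite /w normrZ ger0_norm ?divr_ge0 ?(ltW e0) ?(ltW nw0) //.
  by rewrite mulfVK // gt_eqF.
have wW : (w <= W)%MS by apply: scalemx_sub.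
have w0' : w != 0 by rewrite -normr_eq0 nw gt_eqF // divr_gt0.
have e2 : 0 < e / 2 by rewrite divr_gt0.
have [N HN] := Hv _ e2.
set a := fun k => v (k + N)%N + w.
set b := fun k => v (k + N)%N - w.
set g := fun k => h (phi1 (k + N)%N).
have vq : forall k, `|v (k + N)%N - q| < e / 2.
  by move=> k; rewrite -normrN opprB; apply: HN; rewrite leq_addl.
have Oa : forall k, Om (a k).
  move=> k; apply: He; rewrite /a addrAC.
  apply: le_lt_trans (ler_normD _ _) _; rewrite nw; have := vq k; lra.
have Ob : forall k, Om (b k).
  move=> k; apply: He; rewrite /b addrAC.
  apply: le_lt_trans (ler_normD _ _) _; rewrite normrN nw; have := vq k; lra.
have Hqa : forall k, `|a k - q| < e.
  move=> k; rewrite /a addrAC.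
  apply: le_lt_trans (ler_normD _ _) _; rewrite nw; have := vq k; lra.
have Hqb : forall k, `|b k - q| < e.
  move=> k; rewrite /b addrAC.
  apply: le_lt_trans (ler_normD _ _) _; rewrite normrN nw; have := vq k; lra.
have fab : forall k, 0 < lin_fun f (a k) * lin_fun f (b k).
  move=> k; have h1 := ball_sign pc cc He (Hqa k).
  have h2 := ball_sign pc cc He (Hqb k).
  have := mulr_gt0 h1 h2.
  rewrite mulrACA -expr2 => H2; rewrite -(pmulr_rgt0 _ (_ : 0 < lin_fun f q ^+ 2)) //.
  by rewrite lt0r sqr_ge0 andbT sqrf_eq0 (f_nz pc cc Oq).
set AA := fun k => a k *m g k.
set BB := fun k => b k *m g k.
have fAB : forall k, 0 < lin_fun f (AA k) * lin_fun f (BB k).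
  move=> k; apply: (sign_pres pc cc) => //; exact: (hG _).2.
set Nk := fun k => lin_fun f (AA k) + lin_fun f (BB k).
have [M M0 HM] := Om_bound pc cc.
have OAA : forall k, Om (AA k) by move=> k; apply/(hG _).2.
have OBB : forall k, Om (BB k) by move=> k; apply/(hG _).2.
set A' := fun k => (Nk k)^-1 *: AA k.
set B' := fun k => (Nk k)^-1 *: BB k.
have bA : forall k, `|A' k| <= M.
  move=> k; have [h1 h2 h3] := samesign (fAB k).
  rewrite /A' normrZ normrV ?unitfE // ler_pdivrMl ?normr_gt0 //.
  apply: le_trans (HM _ (OAA k)) _; rewrite mulrC; apply: ler_wpM2r => //; exact: ltW.
have bB : forall k, `|B' k| <= M.
  move=> k; have [h1 h2 h3] := samesign (fAB k).
  rewrite /B' normrZ normrV ?unitfE // ler_pdivrMl ?normr_gt0 //.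
  apply: le_trans (HM _ (OBB k)) _; rewrite mulrC; apply: ler_wpM2r => //; exact: ltW.
have [psi1 [Hpsi1 [As HA1]]] := bolzano bA.
have bB1 : forall k, `|(B' \o psi1) k| <= M by move=> k; apply: bB.
have [psi2 [Hpsi2 [Bs HB]]] := bolzano bB1.
set psi := psi1 \o psi2.
have Hpsi : sincr psi by apply: sincr_comp.
have HA : conv (A' \o psi) As by apply: (conv_sub (u := A' \o psi1)).
have HS := conv_add HA HB.
have f1 : forall k, lin_fun f (A' k + B' k) = 1.
  move=> k; have [_ _ h3] := samesign (fAB k).
  by rewrite lin_funD !lin_funZ -mulrDr mulVf.
have S0 : As + Bs != 0.
  apply/negP => /eqP S0.
  have C0 : 0 < (mxC f + 1)^-1 by rewrite invr_gt0; apply: ltr_wpDl (mxC_ge0 f) _.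
  have [N' HN'] := HS _ C0.
  have := HN' N' (leqnn N'); rewrite S0 sub0r normrN => Hlt.
  have := lin_fun_bound f ((A' \o psi) N' + (B' \o psi) N').
  rewrite /= f1 normr1 => Hle.
  have c0' : 0 < mxC f + 1 by apply: ltr_wpDl (mxC_ge0 f) _.
  move: Hlt; rewrite -[X in _ < X]mul1r ltr_pdivlMr // => Hlt.
  have := mxC_ge0 f; have := normr_ge0 ((A' \o psi) N' + (B' \o psi) N').
  move: Hle Hlt; rewrite /=; lra.

have key : forall t : V, (t <= W)%MS -> t != 0 -> forall Xs : V,
    (forall k, Om (v (k + N)%N + t)) ->
    conv (fun j => (Nk (psi j))^-1 *: ((v (psi j + N)%N + t) *m g (psi j))) Xs ->
    (Xs <= A)%MS.
  move=> t tW t0 Xs Ot HX.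
  case: (eqVneq Xs 0) => [->|Xs0]; first by rewrite sub0mx.
  have qt0 : ~~ ((q + t)%R <= Rr)%MS.
    apply/negP => qt; have tR : (t <= Rr)%MS.
      by have := sub_oppB qt qR; rewrite addrC addKr.
    by move: t0; rewrite (WR _ tW tR) eqxx.
  apply: (H (fun j => v (psi j + N)%N + t) (q + t) (fun j => phi1 (psi j + N)%N) Xs).
  - by move=> j; exact: (pc _ (Ot _)).1.
  - apply/proj_cvgP; split.
      by apply/negP => /eqP qt; move: qt0; rewrite qt sub0mx.
    exists (fun _ => 1).
    under [X in conv X _]funext => j do rewrite scale1r.
    exact: (conv_sub Hpsi (conv_add (conv_shift N Hv) (conv_const t))).
  - exact: qt0.
  - exact: (sincr_comp Hphi1 (sincr_addr N Hpsi)).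
  - apply/proj_cvgP; split => //; exists (fun j => (Nk (psi j))^-1); exact: HX.
have AsA : (As <= A)%MS by apply: (key w wW w0' As Oa HA).
have BsA : (Bs <= A)%MS.
  apply: (key (- w) _ _ Bs Ob HB).
    by rewrite -scaleN1r; apply: scalemx_sub.
  by rewrite oppr_eq0.
have SY : ((As + Bs)%R <= Y)%MS.
  apply: (conv_closed HS) => k /=.
  rewrite /A' /B' -scalerDr /AA /BB -mulmxDl.
  have -> : a (psi k) + b (psi k) = v (psi k + N)%N + v (psi k + N)%N.
    by rewrite /a /b addrACA subrr addr0.
  apply: scalemx_sub; rewrite mulmxDl; apply: addmx_sub;
    by rewrite /v /g -scalemxAl; apply: scalemx_sub; exact: uY.
by move: S0; rewrite (AY _ (addmx_sub AsA BsA) SY) eqxx.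
Qed.
End Core.



Lemma lam_part (R : realType) (d : nat) (h : nat -> 'M[R]_d) (A Rr : 'M[R]_d)
  (Lam : set 'rV[R]_d) :
  pclosed Lam -> (forall n v, Lam v -> Lam (v *m h n)) ->
  (forall n, h n \in unitmx) -> Att h A Rr ->
  forall l, Lam l -> l != 0 -> ~~ (l <= Rr)%MS ->
  exists p, [/\ p != 0, (p <= A)%MS & Lam p].
Proof.
move=> cL iL hu H l Ll l0 lR.
have x0 : forall k, l *m h k != 0.
  move=> k; apply/negP => /eqP z; move: l0.
  by rewrite -(mulmxK (hu k) l) z mul0mx eqxx.
have [phi [Hphi [p Hp]]] := proj_compact_sub x0.
exists p; split.
- by case: Hp.
- exact: (H (fun _ => l) l phi p (fun _ => l0) (proj_const l0) lR Hphi Hp).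
- by apply: (cL _ _ _ Hp) => k; apply: iL.
Qed.

Unset Implicit Arguments.

Theorem mainTheorem6 (R : realType) (d : nat) (Om Lam : set 'rV[R]_d)
  (Gam : set 'M[R]_d) (gam : nat -> 'M[R]_d) (Ep Em : 'M[R]_d) :
  properly_convex_domain Om ->
  aut_subgroup Om Gam ->
  pcone Lam -> pclosed Lam ->
  (forall g v, Gam g -> Lam v -> Lam (v *m g)) ->
  (forall v, Lam v -> pboundary Om v) ->
  (exists f, chart_convex Om f /\ exists v, Om v /\ conv_hull f Lam v) ->
  (forall n, Gam (gam n)) ->
  divergent gam ->
  attracting_repelling gam Ep Em ->
  [/\ supporting Om Ep, supporting Om Em,
      (exists v, [/\ v != 0, (v <= Ep)%MS & Lam v]) &
      (exists v, [/\ v != 0, (v <= Em)%MS & Lam v])].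
Proof.
move=> [pc [op [_ [f cc]]]] [_ [_ HG]] pcL pclL invL bdL
  [f' [_ [v0 [Ov0 [n [lam [t [Hl [_ [_ Hv]]]]]]]]]] Ggam _ [rEp [rEm [rk [sigma [_ H]]]]].
have hG1 : forall k, gam (sigma k) \in unitmx /\
    forall v, Om (v *m gam (sigma k)) <-> Om v.
  by move=> k; have [? _ ?] := HG _ (Ggam (sigma k)).
have hG2 : forall k, invmx (gam (sigma k)) \in unitmx /\
    forall v, Om (v *m invmx (gam (sigma k))) <-> Om v.
  move=> k; have [_ Gi _] := HG _ (Ggam (sigma k)).
  by have [? _ ?] := HG _ Gi.
have AttF := Fseq H.
have AttB := Bseq (fun k => (hG1 k).1) AttF.
have EmO := core pc op cc hG1 AttF rk rEp.
have EpO := core pc op cc hG2 AttB (etrans (addnC _ _) rk) rEm.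
have exl : forall E : 'M[R]_d, (forall q, (q <= E)%MS -> ~ Om q) ->
    exists i, ~~ (lam i <= E)%MS.
  move=> E EO; apply: contrapT => Hn; apply: (EO v0) => //.
  rewrite Hv; apply: summx_sub => i _; apply: scalemx_sub.
  by apply: contraT => Hi; exfalso; apply: Hn; exists i.
have [i Hi] := exl _ EmO.
have [j Hj] := exl _ EpO.
have [p [p0 pE Lp]] := lam_part pclL (fun k v Lv => invL _ v (Ggam (sigma k)) Lv)
  (fun k => (hG1 k).1) AttF (Hl i).1 (pcL _ (Hl i).1).1 Hi.
have Ginv : forall k, Gam (invmx (gam (sigma k))).
  by move=> k; have [_ ? _] := HG _ (Ggam (sigma k)).
have [p' [p0' pE' Lp']] := lam_part pclL
  (fun k v Lv => invL _ v (Ginv k) Lv)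
  (fun k => (hG2 k).1) AttB (Hl j).1 (pcL _ (Hl j).1).1 Hj.
split.
- split => //; exists p; split => //; exact: (bdL _ Lp).1.
- split => //; exists p'; split => //; exact: (bdL _ Lp').1.
- by exists p.
- by exists p'.
Qed.
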